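(* Let $k$ be an infinite field, $d>0$, $a\geq 7$ integers with $\gcd(a,d)=1$, and $R=k[[t^a,t^{2a+d},t^{3a+3d},t^{4a+6d}]]$ with maximal ideal $\mathfrak{m}$. The Hilbert series of the tangent cone $G_{\mathfrak{m}}$, $\sum_{n\geq0}\dim_k(\mathfrak{m}^n/\mathfrak{m}^{n+1})x^n$, equals $$\frac{\sum_{k=0}^{\lfloor a/6\rfloor+2}t_kx^k}{1-x},\qquad t_k=\#\{i\mid 0\leq i\leq a-1,\ \mu_i+\nu_i+\xi_i=k\}.$$
   Context: For $1\leq i\leq a-1$ write $i=6\mu_i+q_i$ with $0\leq q_i<6$, set $(\nu_i,\xi_i)=(1,q_i-3)$ if $q_i\geq3$ and $(\nu_i,\xi_i)=(0,q_i)$ if $q_i<3$; set $(\mu_0,\nu_0,\xi_0)=(0,0,0)$. *)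

(* Defs.v *)
From mathcomp Require Import all_boot all_order all_algebra.
Set Implicit Arguments. Unset Strict Implicit. Unset Printing Implicit Defensive.
Import GRing.Theory.
Local Open Scope ring_scope.

Definition ps (k : fieldType) := nat -> k.

Definition ps_mul (k : fieldType) (f g : ps k) : ps k :=
  fun n => \sum_(i < n.+1) f i * g (n - i)%N.

Definition in_sg (a d s : nat) : Prop :=
  exists c0 c1 c2 c3 : nat,
    s = (c0 * a + c1 * (2 * a + d) + c2 * (3 * a + 3 * d) + c3 * (4 * a + 6 * d))%N.

(* R = k[[t^a, t^(2a+d), t^(3a+3d), t^(4a+6d)]] inside k[[t]]:
   the power series whose support lies in S. *)
Definition Rring (k : fieldType) (a d : nat) (f : ps k) : Prop :=
  forall n, f n != 0 -> in_sg a d n.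

Definition mideal (k : fieldType) (a d : nat) (f : ps k) : Prop :=
  Rring a d f /\ f 0%N = 0.

Fixpoint mpow (k : fieldType) (a d : nat) (n : nat) : ps k -> Prop :=
  match n with
  | 0 => Rring a d
  | n'.+1 => fun f => exists (r : nat) (x y : 'I_r -> ps k),
      (forall j, mideal a d (x j) /\ mpow a d n' (y j)) /\
      f = (fun m => \sum_(j < r) ps_mul (x j) (y j) m)
  end.

Definition lincomb (k : fieldType) (r : nat) (c : 'I_r -> k) (v : 'I_r -> ps k)
  : ps k := fun m => \sum_(i < r) c i * v i m.

(* dim_k (m^n / m^(n+1)) = r : there are r elements of m^n whose classes
   form a k-basis of the quotient m^n / m^(n+1). *)
Definition tangent_cone_dim (k : fieldType) (a d n r : nat) : Prop :=
  exists v : 'I_r -> ps k,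
    (forall i, mpow a d n (v i)) /\
    (forall f, mpow a d n f -> exists c : 'I_r -> k,
        mpow a d n.+1 (fun m => f m - lincomb c v m)) /\
    (forall c : 'I_r -> k, mpow a d n.+1 (lincomb c v) -> forall i, c i = 0).

Definition mu_i (i : nat) : nat := (i %/ 6)%N.
Definition nu_i (i : nat) : nat := if (3 <= i %% 6)%N then 1%N else 0%N.
Definition xi_i (i : nat) : nat :=
  if (3 <= i %% 6)%N then (i %% 6 - 3)%N else (i %% 6)%N.

Definition tcoef (a j : nat) : nat :=
  count (fun i => (mu_i i + nu_i i + xi_i i == j)%N) (iota 0 a).

(* Main.v *)
Require Import Defs.
From mathcomp Require Import all_boot all_order all_algebra.
From mathcomp Require Import zify.
From Stdlib Require Import ClassicalDescription FunctionalExtensionality Classical.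

Definition ord_ (i : nat) := (mu_i i + nu_i i + xi_i i)%N.
Definition cst_ (i : nat) := (4 * mu_i i + 3 * nu_i i + 2 * xi_i i)%N.

Lemma decomp i : i = (6 * mu_i i + 3 * nu_i i + xi_i i)%N /\
  ((nu_i i = 0 /\ xi_i i < 3) \/ (nu_i i = 1 /\ xi_i i < 3))%N.
Proof.
rewrite /mu_i /nu_i /xi_i.
have := divn_eq i 6; have := ltn_pmod i (isT : 0 < 6).
case: (leqP 3 (i %% 6)) => H; lia.
Qed.

Lemma F1 j c1 c2 c3 : j = (c1 + 3*c2 + 6*c3)%N ->
  (3 * mu_i j + 2 * nu_i j + xi_i j <= c1 + 2*c2 + 3*c3)%N.
Proof. have := decomp j. lia. Qed.

Lemma F2 j c1 c2 c3 : j = (c1 + 3*c2 + 6*c3)%N ->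
  (cst_ j <= 2*c1 + 3*c2 + 4*c3)%N.
Proof. rewrite /cst_; have := decomp j. lia. Qed.

Lemma repE a d c0 c1 c2 c3 :
  (c0 * a + c1 * (2 * a + d) + c2 * (3 * a + 3 * d) + c3 * (4 * a + 6 * d) =
   a * (c0 + 2*c1 + 3*c2 + 4*c3) + d * (c1 + 3*c2 + 6*c3))%N.
Proof. nia. Qed.

Lemma cong a d A X i j : coprime a d -> (i < a)%N ->
  (a * A + d * i = a * X + d * j)%N -> exists k, j = (i + k * a)%N /\ A = (X + d * k)%N.
Proof.
move=> cop ia E.
have a0 : (0 < a)%N by lia.
case: (leqP i j) => ij.
- have E2 : (a * A = a * X + d * (j - i))%N.
    have := leq_mul (leqnn d) ij; rewrite mulnBr; lia.
  have AX : (X <= A)%N.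
    by rewrite -(leq_pmul2l a0) E2 leq_addr.
  have H : (a %| d * (j - i))%N.
    apply/dvdnP; exists (A - X); have := leq_mul (leqnn a) AX; rewrite mulnBl; lia.
  move: H; rewrite Gauss_dvdr // => /dvdnP [k Hk].
  exists k; split; first lia.
  have : (a * A = a * (X + d * k))%N by rewrite E2 Hk; lia.
  by move/eqP; rewrite eqn_mul2l; case/orP=> /eqP; lia.
- have E2 : (a * X = a * A + d * (i - j))%N.
    have := leq_mul (leqnn d) (ltnW ij); rewrite mulnBr; lia.
  have H : (a %| d * (i - j))%N.
    apply/dvdnP; have XA : (A <= X)%N by by rewrite -(leq_pmul2l a0) E2 leq_addr.
    exists (X - A); have := leq_mul (leqnn a) XA; rewrite mulnBl; lia.
  move: H; rewrite Gauss_dvdr // => /dvdnP [k Hk].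
  exfalso. case: k Hk => [|k] Hk; lia.
Qed.

Definition inM (a d n s : nat) : Prop :=
  exists c0 c1 c2 c3 : nat,
    s = (c0 * a + c1 * (2 * a + d) + c2 * (3 * a + 3 * d) + c3 * (4 * a + 6 * d))%N
    /\ (n <= c0 + c1 + c2 + c3)%N.

Definition ee (a d n i : nat) := (a * (n - ord_ i + cst_ i) + d * i)%N.

Lemma ee_inM a d n i : (ord_ i <= n)%N -> inM a d n (ee a d n i).
Proof.
move=> H; exists (n - ord_ i), (xi_i i), (nu_i i), (mu_i i); split.
  rewrite /ee /cst_; have [Hd _] := decomp i.
  set m := (n - ord_ i)%N; set x := xi_i i; set y := nu_i i; set z := mu_i i.
  rewrite [in d * i]Hd; nia.
rewrite /ord_ in H *; lia.
Qed.

Lemma lemA a d n i : coprime a d -> (7 <= a)%N -> (i < a)%N -> (ord_ i <= n)%N ->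
  ~ inM a d n.+1 (ee a d n i).
Proof.
move=> cop a7 ia oi [c0 [c1 [c2 [c3 [E N]]]]].
rewrite repE /ee in E.
have [k [Hj HA]] := cong _ _ _ _ _ _ cop ia E.
have Di := decomp i.
move: oi; rewrite /ord_ /cst_ in HA * => oi.
case: k Hj HA => [|k] Hj HA.
- have F := F1 i c1 c2 c3 ltac:(lia).
  rewrite muln0 addn0 in HA; lia.
- have : (i + 7 <= c1 + 3 * c2 + 6 * c3)%N by rewrite Hj; nia.
  lia.
Qed.

Lemma lemB a d n s : (7 <= a)%N -> inM a d n s ->
  inM a d n.+1 s \/ exists i, [/\ (i < a)%N, (ord_ i <= n)%N & s = ee a d n i].
Proof.
move=> a7 [c0 [c1 [c2 [c3 [E N]]]]].
case: (leqP (n.+1) (c0 + c1 + c2 + c3)) => N2.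
  by left; exists c0, c1, c2, c3.
rewrite repE in E.
set j := (c1 + 3 * c2 + 6 * c3)%N in E.
have a0 : (0 < a)%N by lia.
set i := (j %% a)%N; set k := (j %/ a)%N.
have Hj : j = (i + k * a)%N by rewrite addnC /i /k -divn_eq.
have ia : (i < a)%N by rewrite ltn_pmod.
have Di := decomp i.
have F := F1 _ _ _ _ (erefl j).
have G := F2 _ _ _ _ (erefl j).
have Es : (s = a * (c0 + 2 * c1 + 3 * c2 + 4 * c3 + d * k) + d * i)%N.
  by rewrite E Hj; nia.
have kbig : (k = 0 \/ i + 7 <= j)%N.
  case: (posnP k) => [k0|kpos]; [by left | right].
  have : (a <= k * a)%N by rewrite leq_pmull.
  lia.
case: (ltnP (3 * mu_i i + 2 * nu_i i + xi_i i) (c1 + 2 * c2 + 3 * c3 + d * k)) => C.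
- left.
  have cb : (cst_ i <= c0 + 2 * c1 + 3 * c2 + 4 * c3 + d * k)%N.
    rewrite /cst_; case: kbig => [k0|ij].
      have G' := F2 i c1 c2 c3 ltac:(move: Hj; rewrite k0 /j; lia).
      rewrite /cst_ in G'; lia.
    lia.
  exists (c0 + 2 * c1 + 3 * c2 + 4 * c3 + d * k - cst_ i), (xi_i i), (nu_i i), (mu_i i).
  split.
    rewrite Es; case: Di => Di _. rewrite /cst_ in cb *.
    set m := (_ - _)%N; have : (m + cst_ i = c0 + 2 * c1 + 3 * c2 + 4 * c3 + d * k)%N by rewrite /cst_ /m; lia.
    rewrite /cst_ => <-. set x := xi_i i; set y := nu_i i; set z := mu_i i.
    rewrite [in d * i]Di; nia.
  rewrite /cst_ in cb *; lia.
- right. exists i.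
  have k0 : k = 0%N.
    case: kbig => // ij; exfalso; lia.
  have F' := F1 i c1 c2 c3 ltac:(move: Hj; rewrite k0 /j; lia).
  have G' := F2 i c1 c2 c3 ltac:(move: Hj; rewrite k0 /j; lia).
  clear F G.
  rewrite /ee /ord_ /cst_ in G' *.
  split => //; first lia.
  rewrite Es k0 muln0 addn0; congr (_ + _)%N; congr (muln a _)%N; lia.
Qed.

Set Implicit Arguments. Unset Strict Implicit. Unset Printing Implicit Defensive.
Import GRing.Theory.
Local Open Scope ring_scope.

Definition mono (k : fieldType) (g : nat) : ps k := fun m => if m == g then 1 else 0.

Lemma mul_mono (k : fieldType) g (h : ps k) s :
  ps_mul (mono k g) h s = if (g <= s)%N then h (s - g)%N else 0.
Proof.
rewrite /ps_mul /mono; case: leqP => gs.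
- rewrite (bigD1 (Ordinal (gs : g < s.+1)%N)) //= eqxx mul1r big1 ?addr0 // => i Hi.
  have -> : ((i : nat) == g) = false.
    apply/negbTE; apply: contra Hi => /eqP Hig; apply/eqP/val_inj => /=; exact Hig.
  by rewrite mul0r.
- rewrite big1 // => i _.
  have -> : ((i : nat) == g) = false by apply: ltn_eqF; apply: leq_trans (ltn_ord i) gs.
  by rewrite mul0r.
Qed.

Lemma inM0 a d s : inM a d 0 s <-> in_sg a d s.
Proof.
split; first by move=> [c0 [c1 [c2 [c3 [E _]]]]]; exists c0, c1, c2, c3.
by move=> [c0 [c1 [c2 [c3 E]]]]; exists c0, c1, c2, c3.
Qed.

Lemma inM1 a d s : (0 < a)%N -> in_sg a d s -> s <> 0%N -> inM a d 1 s.
Proof.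
move=> a0 [c0 [c1 [c2 [c3 E]]]] s0; exists c0, c1, c2, c3; split => //.
rewrite E in s0; nia.
Qed.

Lemma inM_add a d n s t : inM a d 1 s -> inM a d n t -> inM a d n.+1 (s + t).
Proof.
move=> [c0 [c1 [c2 [c3 [E N]]]]] [e0 [e1 [e2 [e3 [F M]]]]].
exists (c0 + e0)%N, (c1 + e1)%N, (c2 + e2)%N, (c3 + e3)%N; split; first by rewrite E F; nia.
lia.
Qed.

Lemma M1a (k : fieldType) a d n (f : ps k) : (0 < a)%N ->
  mpow a d n f -> forall s, f s != 0 -> inM a d n s.
Proof.
move=> a0; elim: n f => [|n IH] f /=.
  by move=> Hf s /Hf; rewrite inM0.
move=> [r [x [y [Hxy ->]]]] s Hs.
have [j Hj] : exists j : 'I_r, ps_mul (x j) (y j) s != 0.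
  apply/existsP; apply: contraR Hs; rewrite negb_exists => /forallP Hall.
  by rewrite big1 // => j _; move: (Hall j); rewrite negbK => /eqP.
have [i _ Hi] : exists2 i : 'I_s.+1, true & x j i * y j (s - i)%N != 0.
  apply/exists_inP; apply: contraR Hj; rewrite negb_exists_in => /forall_inP Hall.
  by rewrite /ps_mul big1 // => i _; move: (Hall i isT); rewrite negbK => /eqP.
have [Hx Hy] := Hxy j.
move: Hi; rewrite mulf_eq0 negb_or => /andP [xi yi].
have -> : s = (i + (s - i))%N by rewrite subnKC // -ltnS.
apply: inM_add; last exact: IH (y j) Hy _ yi.
case: Hx => Rx x0; apply: inM1 => //; first exact: Rx.
by move=> i0; move: xi; rewrite i0 x0 eqxx.
Qed.

Definition gen (a d : nat) (j : 'I_4) : nat :=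
  nth 0%N [:: a; 2 * a + d; 3 * a + 3 * d; 4 * a + 6 * d]%N j.

Lemma gen_sg a d j : in_sg a d (gen a d j).
Proof.
rewrite /gen; case: j => [[|[|[|[|j]]]] i] //=.
- by exists 1%N, 0%N, 0%N, 0%N; lia.
- by exists 0%N, 1%N, 0%N, 0%N; lia.
- by exists 0%N, 0%N, 1%N, 0%N; lia.
- by exists 0%N, 0%N, 0%N, 1%N; lia.
Qed.

Lemma gen_pos a d j : (0 < a)%N -> (0 < gen a d j)%N.
Proof. by rewrite /gen; case: j => [[|[|[|[|j]]]] i] //=; lia. Qed.

Lemma inM_split a d n s : inM a d n.+1 s ->
  exists j, (gen a d j <= s)%N /\ inM a d n (s - gen a d j).
Proof.
move=> [c0 [c1 [c2 [c3 [E N]]]]].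
case: (posnP c0) => [z0|p0].
  case: (posnP c1) => [z1|p1].
    case: (posnP c2) => [z2|p2].
      exists (@Ordinal 4 3 isT); rewrite /gen /=; split; first by rewrite E; nia.
      exists c0, c1, c2, c3.-1; split; last by lia.
      rewrite E; case: (c3) N => [|c] N; first lia. nia.
    exists (@Ordinal 4 2 isT); rewrite /gen /=; split; first by rewrite E; nia.
    exists c0, c1, c2.-1, c3; split; last by lia.
    rewrite E; case: (c2) p2 => [|c] p; first lia. nia.
  exists (@Ordinal 4 1 isT); rewrite /gen /=; split; first by rewrite E; nia.
  exists c0, c1.-1, c2, c3; split; last by lia.
  rewrite E; case: (c1) p1 => [|c] p; first lia. nia.
exists (@Ordinal 4 0 isT); rewrite /gen /=; split; first by rewrite E; nia.
exists c0.-1, c1, c2, c3; split; last by lia.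
rewrite E; case: (c0) p0 => [|c] p; first lia. nia.
Qed.

Section M1b.
Variables (k : fieldType) (a d : nat).
Hypothesis a0 : (0 < a)%N.

Definition PP n j s := (gen a d j <= s)%N /\ inM a d n (s - gen a d j).
Definition QQ n (j : 'I_4) s := PP n j s /\ forall j' : 'I_4, (j' < j)%N -> ~ PP n j' s.
Definition FF n (f : ps k) j s : k :=
  if excluded_middle_informative (QQ n j s) then f s else 0.

Lemma FF_cases n f j s :
  (QQ n j s /\ FF n f j s = f s) \/ (~ QQ n j s /\ FF n f j s = 0).
Proof. by rewrite /FF; case: (excluded_middle_informative (QQ n j s)) => H; [left|right]. Qed.

Lemma QQ_ex n s : (exists j, PP n j s) -> exists j, QQ n j s.
Proof.
move=> [j Pj].
suff H : forall m (j : 'I_4), (j <= m)%N -> PP n j s -> exists j0, QQ n j0 s.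
  exact: H _ j (leqnn _) Pj.
elim=> [|m IH] j' Hj P'.
  exists j'; split => // j'' Hj''; lia.
case: (classic (exists j'' : 'I_4, (j'' < j')%N /\ PP n j'' s)) => [[j'' [H1 H2]]|H].
  by apply: (IH j'') => //; lia.
exists j'; split => // j'' H1 H2; apply: H; by exists j''.
Qed.

Lemma QQ_uniq n s j1 j2 : QQ n j1 s -> QQ n j2 s -> j1 = j2.
Proof.
move=> [P1 H1] [P2 H2]; apply: val_inj => /=.
case: (ltngtP j1 j2) => // C; [by case: (H2 _ C) | by case: (H1 _ C)].
Qed.

Lemma M1b n (f : ps k) : (forall s, f s != 0 -> inM a d n s) -> mpow a d n f.
Proof.
elim: n f => [|n IH] f Hf /=.
  by move=> s /Hf; rewrite inM0.
exists 4%N, (fun j => mono k (gen a d j)), (fun j s' => FF n f j (s' + gen a d j)).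
split.
  move=> j; split.
    split; last by rewrite /mono; case: eqP => // H; have := gen_pos d j a0; rewrite -H.
    move=> s; rewrite /mono; case: (eqVneq s (gen a d j)) => [->|_]; [by move=> _; exact: gen_sg | by rewrite eqxx].
  apply: IH => s; case: (FF_cases n f j (s + gen a d j)) => [[Q ->]|[_ ->]].
    move=> _; case: Q => [[H1 H] H2]; rewrite addnK in H; exact H.
  by rewrite eqxx.
apply: functional_extensionality => s.
under eq_bigr => j _ do rewrite mul_mono.
have E : forall j, (if (gen a d j <= s)%N then FF n f j (s - gen a d j + gen a d j) else 0) = FF n f j s.
  move=> j; case: leqP => H; first by rewrite subnK.
  case: (FF_cases n f j s) => [[[[H3 H4] H5] _]|[_ ->]] //; lia.
under eq_bigr => j _ do rewrite E.
have [fs0|fsn] := eqVneq (f s) 0.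
  by rewrite fs0 big1 // => j _; case: (FF_cases n f j s) => [[_ ->]|[_ ->]].
have [j0 Q0] := QQ_ex (inM_split (Hf _ fsn)).
rewrite (bigD1 j0) //= big1 ?addr0.
  by case: (FF_cases n f j0 s) => [[_ ->]|[H _]] //; case: (H Q0).
move=> j Hj; case: (FF_cases n f j s) => [[Qj _]|[_ ->]] //.
by move: Hj; rewrite (QQ_uniq Qj Q0) eqxx.
Qed.
End M1b.

Lemma sum_eqb (x m : nat) : (\sum_(0 <= j < m.+1) (x == j) = (x <= m))%N.
Proof.
elim: m => [|m IH]; first by rewrite big_nat1; case: x.
rewrite big_nat_recr //= IH.
case: (leqP x m) => H1; case: (eqVneq x m.+1) => H2; case: (leqP x m.+1) => H3 //=; lia.
Qed.

Lemma sum_count (m : nat) (s : seq nat) :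
  (\sum_(0 <= j < m.+1) count (fun i => ord_ i == j) s = count (fun i => ord_ i <= m) s)%N.
Proof.
elim: s => [|x s IH]; first by rewrite big1.
by rewrite /= big_split /= IH sum_eqb.
Qed.

Lemma ord_bound a i : (i < a)%N -> (ord_ i <= a %/ 6 + 2)%N.
Proof. rewrite /ord_; have := decomp i; lia. Qed.

Lemma lc_nth (k : fieldType) (L : seq nat) (c : 'I_(size L) -> k) (i : 'I_(size L)) :
  uniq L -> lincomb c (fun j : 'I_(size L) => mono k (nth 0%N L j)) (nth 0%N L i) = c i.
Proof.
move=> uL; rewrite /lincomb (bigD1 i) //= /mono eqxx mulr1 big1 ?addr0 // => j ji.
have -> : (nth 0%N L i == nth 0%N L j) = false.
  by apply/negbTE; rewrite nth_uniq // eq_sym.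
by rewrite mulr0.
Qed.

Lemma lc_notin (k : fieldType) (L : seq nat) (c : 'I_(size L) -> k) m :
  m \notin L -> lincomb c (fun j : 'I_(size L) => mono k (nth 0%N L j)) m = 0.
Proof.
move=> mL; rewrite /lincomb big1 // => j _; rewrite /mono.
case: eqP => [E|_]; last by rewrite mulr0.
by move: mL; rewrite E mem_nth.
Qed.

Local Close Scope ring_scope.

Theorem corollary6p9 (k : fieldType)
  (k_infinite : forall s : seq k, exists x : k, x \notin s)
  (a d : nat) (d_gt0 : (0 < d)%N) (a_ge7 : (7 <= a)%N) (cop : coprime a d) :
  forall n : nat,
    tangent_cone_dim k a d n
      (\sum_(0 <= j < (minn n (a %/ 6 + 2)).+1) tcoef a j)%N.
Proof.
move=> n.
have a0 : (0 < a)%N by lia.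
set L := map (ee a d n) (filter (fun i => (ord_ i <= n)%N) (seq.iota 0%N a)).
have Hr : (\sum_(0 <= j < (minn n (a %/ 6 + 2)).+1) tcoef a j)%N = size L.
  rewrite size_map size_filter /tcoef.
  rewrite (sum_count (minn n (a %/ 6 + 2)) (seq.iota 0 a)).
  apply: eq_in_count => i; rewrite mem_iota add0n => Hi.
  by rewrite leq_min (ord_bound Hi) andbT.
have memL : forall m, m \in L -> exists i, [/\ (i < a)%N, (ord_ i <= n)%N & m = ee a d n i].
  move=> m /mapP [i]; rewrite mem_filter mem_iota add0n => /andP [H1 H2] ->.
  by exists i.
have Lmem : forall i, (i < a)%N -> (ord_ i <= n)%N -> ee a d n i \in L.
  move=> i H1 H2; apply: map_f; by rewrite mem_filter mem_iota add0n H1 H2.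
have uL : uniq L.
  rewrite map_inj_in_uniq ?filter_uniq ?iota_uniq //.
  move=> i j; rewrite !mem_filter !mem_iota !add0n => /andP [_ Hi] /andP [_ Hj] E.
  rewrite /ee in E.
  have [kk [H1 H2]] := cong _ _ _ _ _ _ cop Hi E.
  case: kk H1 H2 => [|kk] H1 H2; first lia.
  exfalso; have : (a <= kk.+1 * a)%N by rewrite leq_pmull. lia.
rewrite Hr.
exists (fun i : 'I_(size L) => mono k (nth 0%N L i)).
split; [|split].
- move=> i; apply: M1b => // s; rewrite /mono; case: (eqVneq s (nth 0%N L i)) => [->|_]; last by rewrite eqxx.
  move=> _; have [i' [H1 H2 ->]] := memL _ (mem_nth 0%N (ltn_ord i)).
  exact: ee_inM.
- move=> f Hf; exists (fun i => f (nth 0%N L i)).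
  apply: M1b => // s Hs.
  have [sL|sL] := boolP (s \in L).
    move: Hs; rewrite -(nth_index 0%N sL).
    have Hi : (index s L < size L)%N by rewrite index_mem.
    rewrite -[index s L]/(nat_of_ord (Ordinal Hi)) lc_nth // subrr eqxx //.
  move: Hs; rewrite lc_notin // subr0 => Hs.
  have := M1a a0 Hf Hs.
  case/(lemB a d n s a_ge7) => // [[i [H1 H2 E]]].
  by move: sL; rewrite E Lmem.
- move=> c Hc i; apply/eqP; apply: contraT => ci.
  have := M1a a0 Hc (s := nth 0%N L i); rewrite lc_nth // => /(_ ci).
  have [i' [H1 H2 ->]] := memL _ (mem_nth 0%N (ltn_ord i)).
  by move=> H; exfalso; exact: (lemA a d n i' cop a_ge7 H1 H2 H).
Qed.
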